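(* Let $E$ be a finite set and let $P$ be a nonempty partition of the set $\cup P$, where $\cup P\subseteq E$. Let $M_E(P)$ be the unique partition matroid determined by $P$. Then $F(M_E(P))=P$.
   Context: For a set family $S$, $\cup S=\bigcup_{X\in S}X$. A partition of a set $U$ is a family of nonempty, pairwise disjoint subsets of $U$ with union $U$. The unique partition matroid $M_E(P)$ is the matroid $(E,\mathcal{I}_P)$ with $\mathcal{I}_P=\{X\subseteq\cup P: |X\cap D|\le 1 \text{ for all } D\in P\}$. For a matroid $M$ with independent sets $\mathcal{I}(M)$, rank function $r$ and rank $r(M)>0$: $s(M)=\{A\in\mathcal{I}(M): |A|=r(M)-1\}$; $K_M(X)=\{a\in E: r(X\cup\{a\})=r(X)+1\}$; and the forming base family is $F(M)=\{K_M(X): X\in s(M)\}$. *)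

(* Defs.v *)
From mathcomp Require Import all_boot.
Set Implicit Arguments. Unset Strict Implicit. Unset Printing Implicit Defensive.

(* A matroid on ground set E (a finite set of elements of a finType T) is
   represented by its family of independent sets I : {set {set T}}. *)
Section MatroidNotions.
Variable T : finType.

Definition mrank (I : {set {set T}}) (X : {set T}) : nat :=
  \max_(Y in I | Y \subset X) #|Y|.

Definition mrankM (E : {set T}) (I : {set {set T}}) : nat := mrank I E.

Definition sM (E : {set T}) (I : {set {set T}}) : {set {set T}} :=
  [set A in I | #|A| == (mrankM E I).-1].

Definition KM (E : {set T}) (I : {set {set T}}) (X : {set T}) : {set T} :=
  [set a in E | mrank I (a |: X) == (mrank I X).+1].

Definition FM (E : {set T}) (I : {set {set T}}) : {set {set T}} :=
  [set KM E I X | X in sM E I].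

(* independent sets of the partition matroid M_E(P) *)
Definition partI (P : {set {set T}}) : {set {set T}} :=
  [set X : {set T} | (X \subset cover P) && [forall D in P, #|X :&: D| <= 1]].

End MatroidNotions.

(* Main.v *)
Require Import Defs.
From mathcomp Require Import all_boot.
Set Implicit Arguments. Unset Strict Implicit. Unset Printing Implicit Defensive.

Section Aux.
Variable T : finType.
Variable P : {set {set T}}.
Hypothesis tP : trivIset P.
Hypothesis nP : set0 \notin P.

Definition SS (X : {set T}) := [set D in P | D :&: X != set0].

Lemma SS_sub (X Y : {set T}) : X \subset Y -> SS X \subset SS Y.
Proof.
move=> XY; apply/subsetP=> D; rewrite !inE => /andP[-> /set0Pn[x]].
rewrite inE => /andP[xD xX]; apply/set0Pn; exists x; rewrite inE xD.
exact: (subsetP XY).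
Qed.

Lemma indep_pblock (Y : {set T}) : Y \in partI P ->
  pblock P @: Y = SS Y /\ #|Y| = #|SS Y|.
Proof.
rewrite inE => /andP[Ycov /forall_inP Y1].
have eqS : pblock P @: Y = SS Y.
  apply/setP=> D; apply/imsetP/idP.
    move=> [y yY ->]; have yc := subsetP Ycov y yY.
    rewrite inE pblock_mem //=; apply/set0Pn; exists y.
    by rewrite inE mem_pblock yc.
  rewrite inE => /andP[DP /set0Pn[y]]; rewrite inE => /andP[yD yY].
  by exists y => //; rewrite (def_pblock tP DP yD).
split=> //; rewrite -eqS card_in_imset //.
move=> y1 y2 y1Y y2Y eqb.
have c1 := subsetP Ycov y1 y1Y; have c2 := subsetP Ycov y2 y2Y.
have := Y1 _ (pblock_mem c1) => /card_le1_eqP H.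
apply: H; rewrite inE ?y1Y ?y2Y ?mem_pblock ?c1 //.
by rewrite eqb mem_pblock c2.
Qed.

Lemma mrank_SS (X : {set T}) : mrank (partI P) X = #|SS X|.
Proof.
apply/eqP; rewrite eqn_leq; apply/andP; split.
  apply/bigmax_leqP => Y /andP[YI YX].
  have [_ ->] := indep_pblock YI; exact/subset_leq_card/SS_sub.
have [->|/set0Pn[x0 x0X]] := eqVneq X set0.
  have -> : SS set0 = set0.
    by apply/setP=> D; rewrite !inE setI0 eqxx andbF.
  by rewrite cards0.
pose f D := odflt x0 [pick y in D :&: X].
have fD : forall D, D \in SS X -> f D \in D :&: X.
  move=> D; rewrite inE => /andP[_ /set0Pn[y yDX]].
  rewrite /f; case: pickP => [z zz //|/(_ y)]; by rewrite yDX.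
have fP : forall D, D \in SS X -> pblock P (f D) = D.
  move=> D DS; have := fD D DS; rewrite inE => /andP[fDD _].
  by move: DS; rewrite inE => /andP[DP _]; rewrite (def_pblock tP DP fDD).
have inj : {in SS X &, injective f}.
  by move=> D1 D2 h1 h2 e; rewrite -(fP _ h1) -(fP _ h2) e.
have YI : f @: SS X \in partI P.
  rewrite inE; apply/andP; split.
    apply/subsetP=> y /imsetP[D DS ->]; have := fD D DS.
    rewrite inE => /andP[fDD _]; apply/bigcupP; exists D => //.
    by move: DS; rewrite inE => /andP[].
  apply/forall_inP=> D DP; apply/card_le1_eqP=> y1 y2.
  rewrite !inE => /andP[/imsetP[D1 h1 ->] y1D] /andP[/imsetP[D2 h2 ->] y2D].
  have e1 : D1 = D by rewrite -(fP _ h1) (def_pblock tP DP y1D).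
  have e2 : D2 = D by rewrite -(fP _ h2) (def_pblock tP DP y2D).
  by rewrite e1 e2.
rewrite -(card_in_imset inj).
rewrite /mrank; apply: (@leq_bigmax_cond _ (fun Y : {set T} => (Y \in partI P) && (Y \subset X)) (fun Y : {set T} => #|Y|)); rewrite YI /=.
apply/subsetP=> y /imsetP[D DS ->]; have := fD D DS.
by rewrite inE => /andP[].
Qed.

End Aux.

Section Main.
Variable T : finType.
Variable P : {set {set T}}.
Hypothesis tP : trivIset P.
Hypothesis nP : set0 \notin P.

Lemma SS_U1 (a : T) (A : {set T}) :
  SS P (a |: A) = if a \in cover P then pblock P a |: SS P A else SS P A.
Proof.
have key : forall D, (D :&: (a |: A) != set0) = (a \in D) || (D :&: A != set0).
  move=> D; apply/set0Pn/orP.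
    move=> [x]; rewrite !inE => /andP[xD /orP[/eqP <-|xA]]; first by left.
    by right; apply/set0Pn; exists x; rewrite inE xD.
  move=> [aD|/set0Pn[x]]; first by exists a; rewrite !inE aD eqxx.
  by rewrite inE => /andP[xD xA]; exists x; rewrite !inE xD xA orbT.
case: ifP => ac; apply/setP=> D; rewrite !inE key.
  case: (boolP (D \in P)) => DP /=; last first.
    by rewrite orbF; apply/esym/negbTE; apply: contraNN DP => /eqP ->; exact: pblock_mem.
  case: (boolP (a \in D)) => aD /=; first by rewrite (def_pblock tP DP aD) eqxx.
  case: (eqVneq D (pblock P a)) => [e|] //=; case/negP: aD; by rewrite e mem_pblock.
case: (boolP (D \in P)) => DP //=.
case: (boolP (a \in D)) => aD //=.
by move: ac; rewrite (_ : a \in cover P = true) //; apply/bigcupP; exists D.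
Qed.

Lemma KM_char (E : {set T}) (A : {set T}) : cover P \subset E ->
  KM E (partI P) A = [set a in cover P | pblock P a \notin SS P A].
Proof.
move=> cE; apply/setP=> a; rewrite /KM [in LHS]inE !(mrank_SS tP) SS_U1.
have SAP : SS P A \subset P by apply/subsetP=> ?; rewrite inE => /andP[]. 
set S := SS P A; clearbody S; rewrite !inE.
case: ifP => ac /=.
  rewrite (subsetP cE a ac) /= cardsU1.
  case: (pblock P a \in S) => /=; last by rewrite add1n eqxx.
  by rewrite add0n; apply/negbTE; rewrite neq_ltn ltnSn.
by rewrite [_ == _.+1](_ : _ = false) ?andbF //; apply/negbTE; rewrite neq_ltn ltnSn.
Qed.

Lemma KM_one (E : {set T}) (A D0 : {set T}) : cover P \subset E ->
  D0 \in P -> SS P A = P :\ D0 -> KM E (partI P) A = D0.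
Proof.
move=> cE D0P eS; rewrite KM_char // eS; apply/setP=> a; rewrite !inE.
case: (boolP (a \in cover P)) => ac /=; last first.
  by apply/esym/negbTE; apply: contraNN ac => aD; apply/bigcupP; exists D0.
rewrite pblock_mem // andbT negbK; apply/eqP/idP.
  by move=> <-; rewrite mem_pblock.
by move=> aD; rewrite (def_pblock tP D0P aD).
Qed.

End Main.

Theorem theorem6 (T : finType) (E : {set T}) (P : {set {set T}}) :
  partition P (cover P) -> P != set0 -> cover P \subset E ->
  FM E (partI P) = P.
Proof.
move=> /and3P[_ tP nP] Pn0 cE.
have SSE : SS P E = P.
  apply/setP=> D; rewrite inE; case: (boolP (D \in P)) => DP //=.
  have /set0Pn[x xD] : D != set0 by apply: contraNN nP => /eqP <-.
  apply/set0Pn; exists x; rewrite inE xD; apply: (subsetP cE).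
  by apply/bigcupP; exists D.
have rk : mrankM E (partI P) = #|P| by rewrite /mrankM (mrank_SS tP) SSE.
have P0 : 0 < #|P| by rewrite card_gt0.
apply/setP=> D; apply/idP/idP.
  case/imsetP=> A; rewrite inE rk => /andP[AI /eqP cA] ->.
  have [_ cS] := indep_pblock tP AI.
  have SP : SS P A \subset P by apply/subsetP=> D'; rewrite inE => /andP[].
  have : #|P :\: SS P A| == 1.
    by rewrite cardsD (setIidPr SP) -cS cA; move: P0; case: #|P| => // n _; rewrite subSnn.
  case/cards1P=> D0 e.
  have D0P : D0 \in P by have := set11 D0; rewrite -e inE => /andP[].
  rewrite (KM_one tP cE D0P) //; apply/setP=> D'; rewrite in_setD1.
  case: (boolP (D' \in SS P A)) => DS.
    rewrite (subsetP SP _ DS) andbT; apply/esym; apply: contraTN DS.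
    by move/eqP=> ->; have := set11 D0; rewrite -e inE => /andP[].
  case: (boolP (D' \in P)) => D'P; rewrite ?andbF // andbT.
  have : D' \in P :\: SS P A by rewrite inE DS D'P.
  by rewrite e inE => ->.
move=> DP.
pose X := cover P :\: D.
have SX : SS P X = P :\ D.
  apply/setP=> D'; rewrite in_setD1 inE; case: (boolP (D' \in P)) => D'P; rewrite ?andbF ?andbT //.
  case: (eqVneq D' D) => [->|ne] /=.
    apply/negbTE; rewrite negbK; apply/eqP/setP=> x; rewrite !inE.
    by case: (x \in D).
  have /set0Pn[x xD'] : D' != set0 by apply: contraNN nP => /eqP <-.
  apply/set0Pn; exists x; rewrite !inE xD' /=; apply/andP; split.
    apply/negP=> xD; case/eqP: ne.
    by rewrite -(def_pblock tP D'P xD') (def_pblock tP DP xD).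
  by apply/bigcupP; exists D'.
have pos : 0 < #|[pred Y : {set T} | (Y \in partI P) && (Y \subset X)]|.
  apply/card_gt0P; exists set0; rewrite inE /= sub0set andbT inE sub0set /=.
  by apply/forall_inP=> D' _; rewrite set0I cards0.
have [Y /andP[YI YX] eY] := eq_bigmax_cond (fun Y : {set T} => #|Y|) pos.
have mX : mrank (partI P) X = #|Y| by rewrite /mrank eY.
rewrite (mrank_SS tP) in mX.
have [_ cS] := indep_pblock tP YI.
have SY : SS P Y = P :\ D.
  by apply/eqP; rewrite -SX eqEcard SS_sub //= -cS mX leqnn.
rewrite /FM; apply/imsetP; exists Y.
  by rewrite /sM inE YI rk /= cS SY (cardsD1 D P) DP.
by rewrite (KM_one tP cE DP SY).
Qed.
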